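(* Let $m\ge 2$, let the key set $\{k_1,\dots,k_m\}$ be $\epsilon$-JL with $\epsilon\le\frac{1}{m^2(m-1)}$, and let the values satisfy $\langle v_i,v_i\rangle=1$ for all $i$ and $|\langle v_i,v_j\rangle|\le\alpha$ for all $i\neq j$, where $\alpha<\frac{m-1}{m+1}$. Then for every $m$-repetitive MQAR stream over $S$, every $0\le t\le N$, and every $i$ with $r_i^{(t)}>0$, the decoding step applied to the query $k_i$ and the gradient-descent state $W^{(t)}$ outputs exactly $v_i$. Thus gradient descent with decoding solves $m$-repetitive MQAR exactly using a state of $d^2$ parameters.
   Context: All vectors are row vectors in $\mathbb{R}^{1\times d}$. Fix $m\ge 1$ and a set $S=\{(k_1,v_1),\dots,(k_m,v_m)\}$ with $k_1,\dots,k_m\in\mathbb{R}^{1\times d}$ pairwise distinct and $v_1,\dots,v_m\in\mathbb{R}^{1\times d}$. An $m$-repetitive MQAR stream is a sequence $(k^{(1)},v^{(1)}),\dots,(k^{(N)},v^{(N)})$ with $(k^{(t)},v^{(t)})\in S$ for every $t$. For $0\le t\le N$ and $i\in\{1,\dots,m\}$, $r_i^{(t)}$ denotes the number of $s\in\{1,\dots,t\}$ with $(k^{(s)},v^{(s)})=(k_i,v_i)$. The key set is $\epsilon$-JL if $\langle k_i,k_i\rangle=1$ for all $i$ and $|\langle k_i,k_j\rangle|\le\epsilon$ for all $i\neq j$. The gradient-descent (delta-rule) state is the sequence of matrices $W^{(t)}\in\mathbb{R}^{d\times d}$ defined by $W^{(0)}=0$ and $W^{(t+1)}=W^{(t)}-(k^{(t+1)})^{\top}k^{(t+1)}W^{(t)}+(k^{(t+1)})^{\top}v^{(t+1)}$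 for $0\le t<N$. Decoding step: given a query $k_i$ and a state $W$, output $v_{i^*}$ where $i^*=\arg\max_{i'\in\{1,\dots,m\}}\langle v_{i'},k_iW\rangle$. *)

(* Defs.v *)
From HB Require Import structures.
From mathcomp Require Import all_boot all_order all_algebra.
From mathcomp Require Import reals.
Set Implicit Arguments. Unset Strict Implicit. Unset Printing Implicit Defensive.
Import Order.TTheory GRing.Theory Num.Theory.
Local Open Scope ring_scope.

Definition dotv (R : realType) (d : nat) (a b : 'rV[R]_d) : R := (a *m b^T) 0 0.

Definition gd_step (R : realType) (d : nat) (W : 'M[R]_d) (kv : 'rV[R]_d * 'rV[R]_d)
  : 'M[R]_d := W - (kv.1)^T *m kv.1 *m W + (kv.1)^T *m kv.2.

Definition gd_state (R : realType) (d : nat) (st : seq ('rV[R]_d * 'rV[R]_d)) (t : nat)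
  : 'M[R]_d := foldl (@gd_step R d) 0 (take t st).

Definition rcount (R : realType) (d : nat) (st : seq ('rV[R]_d * 'rV[R]_d))
  (p : 'rV[R]_d * 'rV[R]_d) (t : nat) : nat := count (pred1 p) (take t st).

Definition eps_JL (R : realType) (d m : nat) (k : 'I_m -> 'rV[R]_d) (eps : R) : Prop :=
  (forall i, dotv (k i) (k i) = 1) /\
  (forall i j, i != j -> `|dotv (k i) (k j)| <= eps).

Definition mqar_stream (R : realType) (d m : nat) (k v : 'I_m -> 'rV[R]_d)
  (st : seq ('rV[R]_d * 'rV[R]_d)) : Prop :=
  forall p, p \in st -> exists i : 'I_m, p = (k i, v i).

(* The decoding step on query q and state W outputs x: whichever
   i* = argmax_{i'} <v_{i'}, q W> is selected, v_{i*} = x. *)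
Definition decodes_to (R : realType) (d m : nat) (v : 'I_m -> 'rV[R]_d)
  (q : 'rV[R]_d) (W : 'M[R]_d) (x : 'rV[R]_d) : Prop :=
  forall istar : 'I_m,
    (forall j : 'I_m, dotv (v j) (q *m W) <= dotv (v istar) (q *m W)) ->
    v istar = x.

(* Main.v *)
Require Import Defs.
From HB Require Import structures.
From mathcomp Require Import all_boot all_order all_algebra.
From mathcomp Require Import reals.
From mathcomp Require Import ring lra.
Import Order.TTheory GRing.Theory Num.Theory.
Local Open Scope ring_scope.
Set Implicit Arguments. Unset Strict Implicit. Unset Printing Implicit Defensive.

Lemma dotvC (R : realType) (d : nat) (a b : 'rV[R]_d) : dotv a b = dotv b a.
Proof. by rewrite /dotv -[b in RHS]trmxK -trmx_mul [RHS]mxE. Qed.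

Lemma dotvDr (R : realType) (d : nat) (a b c : 'rV[R]_d) :
  dotv a (b + c) = dotv a b + dotv a c.
Proof. by rewrite /dotv linearD /= mulmxDr mxE. Qed.

Lemma dotv0r (R : realType) (d : nat) (a : 'rV[R]_d) : dotv a 0 = 0.
Proof. by rewrite /dotv trmx0 mulmx0 mxE. Qed.

Lemma dotvZr (R : realType) (d : nat) (a b : 'rV[R]_d) (s : R) :
  dotv a (s *: b) = s * dotv a b.
Proof. by rewrite /dotv linearZ /= -scalemxAr mxE. Qed.

Lemma dotv_sumr (R : realType) (d m : nat) (a : 'rV[R]_d) (F : 'I_m -> 'rV[R]_d) :
  dotv a (\sum_l F l) = \sum_l dotv a (F l).
Proof. elim/big_rec2: _ => [|l x y _ IH]; [exact: dotv0r | by rewrite dotvDr IH]. Qed.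

Lemma mul_tr (R : realType) (d : nat) (a b : 'rV[R]_d) :
  a *m b^T = (dotv a b)%:M.
Proof. by rewrite {1}[a *m b^T]mx11_scalar. Qed.

Lemma step_u (R : realType) (d : nat) (W : 'M[R]_d) (a kj vj : 'rV[R]_d) :
  a *m gd_step W (kj, vj) = a *m W - dotv a kj *: (kj *m W) + dotv a kj *: vj.
Proof.
rewrite /gd_step /= mulmxDr mulmxBr !mulmxA mul_tr !mul_scalar_mx.
by rewrite -scalemxAl.
Qed.
Definition Nrm (R : realType) m (E : 'I_m -> 'I_m -> R) i := \sum_l `|E i l|.
Definition Ssum (R : realType) m (E : 'I_m -> 'I_m -> R) := \sum_i Nrm E i.
Definition upd (R : realType) m (G E : 'I_m -> 'I_m -> R) j :=
  fun i l => E i l - G i j * E j l.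

Lemma Nrm_ge0 (R : realType) m (E : 'I_m -> 'I_m -> R) i : 0 <= Nrm E i.
Proof. by apply: sumr_ge0 => l _. Qed.

Lemma Nrm_upd_self (R : realType) m (G E : 'I_m -> 'I_m -> R) j :
  G j j = 1 -> Nrm (upd G E j) j = 0.
Proof.
move=> Gjj; rewrite /Nrm /upd Gjj; apply: big1 => l _.
by rewrite mul1r subrr normr0.
Qed.

Lemma Nrm_upd_other (R : realType) m (G E : 'I_m -> 'I_m -> R) j i eps :
  `|G i j| <= eps -> Nrm (upd G E j) i <= Nrm E i + eps * Nrm E j.
Proof.
move=> hG; rewrite /Nrm /upd mulr_sumr -big_split /=.
apply: ler_sum => l _.
apply: (le_trans (ler_normB _ _)); rewrite lerD2l normrM.
by apply: ler_wpM2r.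
Qed.

Lemma Ssum_upd (R : realType) m (G E : 'I_m -> 'I_m -> R) j eps :
  (forall i, i != j -> `|G i j| <= eps) -> G j j = 1 ->
  Ssum (upd G E j) <= Ssum E - (1 - (m%:R - 1) * eps) * Nrm E j.
Proof.
move=> hG Gjj; rewrite /Ssum (bigD1 j) //= Nrm_upd_self // add0r.
rewrite [X in X - _](bigD1 j) //=.
have H1 : \sum_(i < m | i != j) Nrm (upd G E j) i <=
          \sum_(i < m | i != j) (Nrm E i + eps * Nrm E j).
  by apply: ler_sum => i hi; apply: Nrm_upd_other; apply: hG.
apply: (le_trans H1); rewrite big_split /=.
have H2 : \sum_(i < m) eps * Nrm E j = eps * Nrm E j + \sum_(i < m | i != j) eps * Nrm E j.
  by rewrite (bigD1 j).
have H3 : \sum_(i < m) eps * Nrm E j = m%:R * (eps * Nrm E j).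
  by rewrite sumr_const card_ord mulr_natl.
set A := \sum_(i < m | i != j) Nrm E i.
set B := \sum_(i < m | i != j) eps * Nrm E j.
have -> : B = m%:R * (eps * Nrm E j) - eps * Nrm E j by rewrite -H3 H2 addrC addKr.
rewrite mulrBl mul1r; lra.
Qed.

Lemma rep_upd (R : realType) d m (k v : 'I_m -> 'rV[R]_d) (W : 'M[R]_d)
  (E : 'I_m -> 'I_m -> R) j :
  (forall i, k i *m W = v i + \sum_l E i l *: v l) ->
  forall i, k i *m gd_step W (k j, v j) =
    v i + \sum_l upd (fun a b => dotv (k a) (k b)) E j i l *: v l.
Proof.
move=> hW i; rewrite step_u !hW /upd /=.
rewrite [in RHS](eq_bigr (fun l => E i l *: v l - dotv (k i) (k j) *: (E j l *: v l))); last first.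
  by move=> l _; rewrite scalerBl scalerA.
rewrite sumrB -scaler_sumr.
set g := dotv (k i) (k j).
set A := \sum_l E i l *: v l.
set B := \sum_l E j l *: v l.
rewrite scalerDr.
rewrite opprD addrA -!addrA; congr (_ + _).
by congr (_ + _); rewrite addrCA addNr addr0.
Qed.

Lemma base_rep (R : realType) d m (v : 'I_m -> 'rV[R]_d) i :
  \sum_l (if i == l then -1 else 0) *: v l = - v i.
Proof.
rewrite (bigD1 i) //= eqxx big1 ?addr0 ?scaleN1r // => l hl.
by rewrite eq_sym (negbTE hl) scale0r.
Qed.

Lemma base_nrm (R : realType) m i :
  Nrm (fun a b : 'I_m => if a == b then -1 else 0 : R) i = 1.
Proof.
rewrite /Nrm (bigD1 i) //= eqxx big1 ?addr0 ?normrN ?normr1 // => l hl.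
by rewrite eq_sym (negbTE hl) normr0.
Qed.

Lemma inv_exists (R : realType) d m (k v : 'I_m -> 'rV[R]_d) (eps : R) :
  injective k ->
  (forall i, dotv (k i) (k i) = 1) ->
  (forall i j, i != j -> `|dotv (k i) (k j)| <= eps) ->
  0 <= eps -> 0 <= 1 - (m%:R - 1) * eps ->
  forall p, (forall x, x \in p -> exists j, x = (k j, v j)) ->
  exists E : 'I_m -> 'I_m -> R,
   (forall i, k i *m foldl (@gd_step R d) 0 p = v i + \sum_l E i l *: v l) /\
   Ssum E <= m%:R /\
   (forall i, (k i, v i) \in p ->
      (1 - (m%:R - 1) * eps) * Nrm E i + eps * Ssum E <= eps * m%:R).
Proof.
move=> kinj Gii hG he hc.
set c := 1 - (m%:R - 1) * eps.
elim/last_ind => [_|p x IH hp].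
  exists (fun a b => if a == b then -1 else 0); split; last split.
  - by move=> i /=; rewrite mulmx0 base_rep subrr.
  - rewrite /Ssum (eq_bigr (fun _ => 1)); last by move=> i _; apply: base_nrm.
    by rewrite sumr_const card_ord.
  - by move=> i.
have [E [hW [hS hseen]]] : exists E : 'I_m -> 'I_m -> R,
   (forall i, k i *m foldl (@gd_step R d) 0 p = v i + \sum_l E i l *: v l) /\
   Ssum E <= m%:R /\
   (forall i, (k i, v i) \in p -> c * Nrm E i + eps * Ssum E <= eps * m%:R).
  by apply: IH => y hy; apply: hp; rewrite mem_rcons in_cons hy orbT.
have [j hx] : exists j, x = (k j, v j) by apply: hp; rewrite mem_rcons in_cons eqxx.
subst x.
set E' := upd (fun a b => dotv (k a) (k b)) E j.
have hS' : Ssum E' <= Ssum E - c * Nrm E j.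
  by apply: Ssum_upd => // i hi; apply: hG.
have hcN : 0 <= c * Nrm E j by apply: mulr_ge0 => //; apply: Nrm_ge0.
have hS'm : Ssum E' <= m%:R by lra.
have hS'0 : 0 <= Ssum E' by apply: sumr_ge0 => i _; apply: Nrm_ge0.
exists E'; split; last split.
- by move=> i; rewrite foldl_rcons; apply: rep_upd.
- exact: hS'm.
- move=> i hi.
  have self : c * Nrm E' j + eps * Ssum E' <= eps * m%:R.
    rewrite Nrm_upd_self // mulr0 add0r; exact: ler_wpM2l.
  have [/eqP -> // | hij] := boolP (i == j).
  have hip : (k i, v i) \in p.
    move: hi; rewrite mem_rcons in_cons => /orP [/eqP [/kinj hij' _] | //].
    by rewrite hij' eqxx in hij.
  have h1 : Nrm E' i <= Nrm E i + eps * Nrm E j.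
    by apply: Nrm_upd_other; apply: hG.
  have h2 : c * Nrm E' i <= c * (Nrm E i + eps * Nrm E j) by apply: ler_wpM2l.
  have h3 : eps * Ssum E' <= eps * (Ssum E - c * Nrm E j) by apply: ler_wpM2l.
  have := hseen i hip.
  move: h2 h3; rewrite mulrDr mulrBr.
  have -> : c * (eps * Nrm E j) = eps * (c * Nrm E j) by ring.
  lra.
Qed.

Lemma decode_ok (R : realType) d m (v : 'I_m -> 'rV[R]_d) (alpha : R)
  (E : 'I_m -> R) i b :
  (2 <= m)%N -> (forall i, dotv (v i) (v i) = 1) ->
  (forall i j, i != j -> `|dotv (v i) (v j)| <= alpha) ->
  alpha < (m%:R - 1) / (m%:R + 1) -> b != i ->
  (m%:R - 1) * \sum_l `|E l| < 1 ->
  dotv (v b) (v i + \sum_l E l *: v l) < dotv (v i) (v i + \sum_l E l *: v l).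
Proof.
move=> hm vii hv hal hbi hd.
set M : R := m%:R.
have hM : 2 <= M by rewrite /M (ler_nat R 2 m).
have hal' : alpha * (M + 1) < M - 1 by rewrite -ltr_pdivlMr; [exact: hal | lra].
have hgbi : `|dotv (v b) (v i)| <= alpha by apply: hv.
have hgbi' : dotv (v b) (v i) <= alpha by move/ler_normlP: hgbi => [].
set gam := 1 - dotv (v b) (v i).
have hgam : 0 < gam by rewrite /gam; nra.
set K := (M - 1) * gam.
have hw : forall l, `|dotv (v i) (v l) - dotv (v b) (v l)| <= K.
  move=> l.
  have [/eqP -> | hli] := boolP (l == i).
    rewrite vii -/gam ger0_norm; last exact: ltW hgam.
    rewrite /K; nra.
  have [/eqP -> | hlb] := boolP (l == b).
    rewrite vii dotvC -/(dotv (v b) (v i)).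
    have -> : dotv (v b) (v i) - 1 = - gam by rewrite /gam; ring.
    rewrite normrN ger0_norm; last exact: ltW hgam.
    rewrite /K; nra.
  apply: (le_trans (ler_normB _ _)).
  have h1 : `|dotv (v i) (v l)| <= alpha by apply: hv; rewrite eq_sym.
  have h2 : `|dotv (v b) (v l)| <= alpha by apply: hv; rewrite eq_sym.
  rewrite /K /gam; nra.
rewrite !dotvDr !dotv_sumr.
under eq_bigr => l _ do rewrite dotvZr.
under [X in _ < _ + X]eq_bigr => l _ do rewrite dotvZr.
set Sb := \sum_l E l * dotv (v b) (v l).
set Si := \sum_l E l * dotv (v i) (v l).
have hD : Si - Sb = \sum_l E l * (dotv (v i) (v l) - dotv (v b) (v l)).
  by rewrite /Si /Sb -sumrB; apply: eq_bigr => l _; rewrite mulrBr.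
set D := \sum_l E l * (dotv (v i) (v l) - dotv (v b) (v l)) in hD.
have hDb : - D <= K * \sum_l `|E l|.
  apply: (le_trans (ler_normlW (lexx _) ) _) => //.
  rewrite normrN; apply: (le_trans (ler_norm_sum _ _ _)).
  rewrite mulr_sumr; apply: ler_sum => l _.
  by rewrite normrM mulrC ler_wpM2r.
set del := \sum_l `|E l|.
have hp : gam * ((M - 1) * del) < gam * 1 by rewrite ltr_pM2l.
have hKd : K * \sum_l `|E l| = gam * ((M - 1) * del) by rewrite /K /del; ring.
have hgdef : gam = 1 - dotv (v b) (v i) by [].
rewrite vii.
lra.
Qed.

Theorem mainTheorem6 (R : realType) (d m : nat) (k v : 'I_m -> 'rV[R]_d)
    (eps alpha : R) :
  (2 <= m)%N ->
  injective k ->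
  eps_JL k eps ->
  eps <= 1 / ((m ^ 2 * (m - 1))%N%:R) ->
  (forall i, dotv (v i) (v i) = 1) ->
  (forall i j, i != j -> `|dotv (v i) (v j)| <= alpha) ->
  alpha < (m%:R - 1) / (m%:R + 1) ->
  forall st : seq ('rV[R]_d * 'rV[R]_d),
    mqar_stream k v st ->
    forall (t : nat) (i : 'I_m),
      (t <= size st)%N ->
      (0 < rcount st (k i, v i) t)%N ->
      decodes_to v (k i) (gd_state st t) (v i).
Proof.
move=> hm kinj [kii hk] heps vii hv hal st hst t i ht hcnt istar hmax.
have h0 : (0 < m)%N by apply: ltnW.
pose i0 : 'I_m := Ordinal h0.
pose i1 : 'I_m := Ordinal hm.
have hi01 : i0 != i1 by apply/eqP => /(congr1 val).
have he0 : 0 <= eps := le_trans (normr_ge0 (dotv (k i0) (k i1))) (hk i0 i1 hi01).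
set M : R := m%:R.
have hM : 2 <= M by rewrite /M (ler_nat R 2 m).
rewrite natrM natrX natrB ?(ltnW hm) // -/M in heps.
have hP : 0 < M ^+ 2 * (M - 1) by apply: mulr_gt0; nra.
have hepsP : eps * (M ^+ 2 * (M - 1)) <= 1 by rewrite -ler_pdivlMr.
have hq : 1 <= M ^+ 2 * (M - 1) - (M ^+ 2 - 1) by nra.
have hq' : eps * 1 <= eps * (M ^+ 2 * (M - 1) - (M ^+ 2 - 1)) by apply: ler_wpM2l.
have hkey : (M ^+ 2 - 1) * eps < 1.
  move: he0; rewrite le_eqVlt => /orP [/eqP <- | hpos]; first by rewrite mulr0.
  move: hq' hepsP; rewrite mulrBr; lra.
set c := 1 - (M - 1) * eps.
have hc : 0 < c by rewrite /c; nra.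
have hmem : forall x, x \in take t st -> exists j, x = (k j, v j).
  by move=> x hx; apply: hst; apply: mem_take hx.
have [E [hW [hS hseen]]] :=
  inv_exists kinj kii hk he0 (ltW hc) hmem.
have hin : (k i, v i) \in take t st by rewrite -has_pred1 has_count.
have := hseen i hin; rewrite -/M -/c => hci.
have hS0 : 0 <= Ssum E by apply: sumr_ge0 => l _; apply: Nrm_ge0.
have hcd : c * Nrm E i <= eps * M.
  have : 0 <= eps * Ssum E by apply: mulr_ge0.
  lra.
have h1 : (M - 1) * (c * Nrm E i) <= (M - 1) * (eps * M).
  by apply: ler_wpM2l => //; lra.
have h2 : (M - 1) * (eps * M) < c by rewrite /c; nra.
have hdel : (M - 1) * Nrm E i < 1.
  rewrite -(ltr_pM2l hc) mulr1.
  have -> : c * ((M - 1) * Nrm E i) = (M - 1) * (c * Nrm E i) by ring.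
  lra.
apply/eqP; case: (eqVneq istar i) => [-> // | hne].
have := decode_ok (E:=E i) hm vii hv hal hne hdel.
rewrite /gd_state in hmax; rewrite -hW.
by rewrite ltNge hmax.
Qed.
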